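(* Let $N\ge1$, $n\ge1$, $\beta>0$ real, and let $X^{(\beta,N)}_k$ ($k\in\mathcal L^{(1)}_n$) and $T^{(1)}_{ab}(\beta)$ be as in the context. Then: (i) for each $a=1,\dots,N$, $T^{(1)}_{aa}(\beta)X^{(\beta,N)}_k=\#\{i:\underline{k_i}=a\}\,X^{(\beta,N)}_k$; (ii) with $D=z_1\partial_{z_1}+\dots+z_n\partial_{z_n}$, $DX^{(\beta,N)}_k=|\overline{k}|\,X^{(\beta,N)}_k$, where $|\overline k|=\overline{k_1}+\dots+\overline{k_n}$.
   Context: For $k\in\mathbb Z$, $\underline{k}\in\{1,\dots,N\}$, $\overline{k}\in\mathbb Z$ unique with $k=\underline{k}-N\overline{k}$ (componentwise on sequences). Dominance order on $\mathbb Z^n$: distinct $k>l$ iff $\sum k_i=\sum l_i$ and $k_1+\dots+k_i\ge l_1+\dots+l_i$ for all $i$. $\mathcal L^{(1)}_n$ = strictly decreasing sequences in $\mathbb Z^n$. $V=\mathbb C^N$ (basis $v_a$, matrix units $E_{ab}$, $E^{(i)}_{ab}$ acting on the $i$-th factor of $V^{\otimes n}$). On $\mathbb C[z_1^{\pm1},\dots,z_n^{\pm1}]\otimes V^{\otimes n}$, $K_{ij}$ swaps $z_i,z_j$, $P_{ij}$ swaps factors $i,j$; $F_{N,n}=\{f:K_{ij}f=-P_{ij}f\}$, with basis $\hat u_k=\sum_{w\in S_n}\mathrm{sign}(w)z_1^{\overline{k_{w(1)}}}\cdots z_n^{\overline{k_{w(n)}}}\otimes v_{\underline{k_{w(1)}}}\otimes\cdots\otimes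 v_{\underline{k_{w(n)}}}$, $k\in\mathcal L^{(1)}_n$. $Y(\mathfrak{gl}_N)$ is generated by the coefficients of $T_{ab}(u)=\delta_{ab}+\sum_sT^{(s)}_{ab}u^{-s}$ with $(u-v)[T_{ab}(u),T_{cd}(v)]=T_{cb}(v)T_{ad}(u)-T_{cb}(u)T_{ad}(v)$; $A_m(u)=\sum_{w\in S_m}\mathrm{sign}(w)T_{1w(1)}(u)\cdots T_{mw(m)}(u-m+1)$. Let $d_i(\beta)=\beta^{-1}z_i\partial_{z_i}+n-i+\sum_{j>i}\frac{z_j}{z_j-z_i}(K_{ij}-1)-\sum_{j<i}\frac{z_i}{z_i-z_j}(K_{ij}-1)$, $L^{(i)}_{ab}(u)=\delta_{ab}+(u+d_i(\beta))^{-1}E^{(i)}_{ba}$ (expanded in $u^{-1}$) and $T_{ab}(u;\beta)=\sum_cL^{(1)}_{ac_1}(u)\cdots L^{(n)}_{c_{n-1}b}(u)$; this defines a $Y(\mathfrak{gl}_N)$-action on $F_{N,n}$, $A_m(u;\beta)$ is the image of $A_m(u)$, and $T^{(1)}_{ab}(\beta)$ is the coefficient of $u^{-1}$ in $T_{ab}(u;\beta)$ (equal to $\sum_iE^{(i)}_{ba}$). For $k\in\mathcal L^{(1)}_n$, $X^{(\beta,N)}_k$ is the unique common eigenvector of all coefficients of $A_1(u;\beta),\dots,A_N(u;\beta)$ of the form $\hat u_k+\sum_{l\in\mathcal L^{(1)}_n,\,l<k}c_{kl}\hat u_l$. *)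

(* Defs.v *)
From mathcomp Require Import all_boot all_order all_algebra all_fingroup.
From mathcomp Require Import complex.
From mathcomp Require Import Rstruct.
From mathcomp.multinomials Require Import monalg.

Set Implicit Arguments.
Unset Strict Implicit.
Unset Printing Implicit Defensive.

Import Order.TTheory GRing.Theory Num.Theory.
Local Open Scope ring_scope.

Definition RR : Type := Rdefinitions.R.
Definition CC : Type := RR[i].
Definition ofR (x : RR) : CC := Complex x 0.

(* The space C[z_1^{+-1},...,z_n^{+-1}] (x) V^{(x) n}, V = C^N.
   A basis element z^m (x) v_{c_1+1} (x) ... (x) v_{c_n+1} is indexed by
   (m, c) with m : 'I_n -> int (exponents) and c : 'I_n -> 'I_N
   (colours, 0-based: colour c stands for the basis vector v_{c+1}).            *)
Definition expo (n : nat) := {ffun 'I_n -> int}.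
Definition colr (N n : nat) := {ffun 'I_n -> 'I_N}.
Definition Kidx (N n : nat) := (expo n * colr N n)%type.
Definition Sp (N n : nat) := {malg CC[Kidx N n]}.

Definition lext (N n : nat) (phi : Kidx N n -> Sp N n) (f : Sp N n) : Sp N n :=
  \sum_(k <- finmap.enum_fset (msupp f)) f@_k *: phi k.

Definition setf (T : Type) (n : nat) (m : {ffun 'I_n -> T}) (i : 'I_n) (x : T)
  : {ffun 'I_n -> T} := [ffun j => if j == i then x else m j].

Definition swapf (T : Type) (n : nat) (m : {ffun 'I_n -> T}) (i j : 'I_n)
  : {ffun 'I_n -> T} := [ffun l => m (tperm i j l)].

Definition zdz (N n : nat) (i : 'I_n) : Sp N n -> Sp N n :=
  lext (fun k => (k.1 i)%:~R *: << k >>).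

Definition Kop (N n : nat) (i j : 'I_n) : Sp N n -> Sp N n :=
  lext (fun k => << (swapf k.1 i j, k.2) >>).

Definition Pop (N n : nat) (i j : 'I_n) : Sp N n -> Sp N n :=
  lext (fun k => << (k.1, swapf k.2 i j) >>).

Definition Eop (N n : nat) (i : 'I_n) (a b : 'I_N) : Sp N n -> Sp N n :=
  lext (fun k => if k.2 i == b then << (k.1, setf k.2 i a) >> else 0).

(* Qop a b = z_a/(z_a - z_b) (K_{ab} - 1)  (for a <> b), computed on
   monomials: with p = exponent of z_a, q = exponent of z_b,
   (z_a^q z_b^p - z_a^p z_b^q)/(z_a - z_b)
     = sgn * sum_{r < |p-q|} z_a^{min(p,q)+r} z_b^{max(p,q)-1-r},
   sgn = 1 if p < q, -1 otherwise; then multiplied by z_a.            *)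
Definition Qop (N n : nat) (a b : 'I_n) : Sp N n -> Sp N n :=
  lext (fun k =>
    let p := k.1 a in let q := k.1 b in
    let lo := Num.min p q in let hi := Num.max p q in
    (if p < q then 1 else -1) *:
      \sum_(r < absz (p - q))
         << (setf (setf k.1 a (lo + r%:Z + 1)) b (hi - 1 - r%:Z), k.2) >>).

(* d_i(beta), i 0-based (paper's index i+1, so n - (i+1) in the constant) *)
Definition dop (N n : nat) (beta : RR) (i : 'I_n) (f : Sp N n) : Sp N n :=
  ofR (beta^-1) *: zdz i f + (n - i.+1)%:R *: f
  + \sum_(j : 'I_n | (i < j)%N) Qop j i f
  - \sum_(j : 'I_n | (j < i)%N) Qop i j f.

(* Formal series in u^{-1} with operator coefficients:
   F s is the coefficient of u^{-s}. *)
Definition ser (N n : nat) := nat -> Sp N n -> Sp N n.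

Definition serone (N n : nat) : ser N n := fun s f => if s == 0%N then f else 0.
Definition serzero (N n : nat) : ser N n := fun _ _ => 0.
Definition sermul (N n : nat) (F G : ser N n) : ser N n :=
  fun s f => \sum_(r < s.+1) F r (G (s - r)%N f).

(* L^{(i)}_{ab}(u - c) = delta_ab + (u - c + d_i(beta))^{-1} E^{(i)}_{ba},
   (u + d)^{-1} = sum_{s >= 0} (-d)^s u^{-s-1}. *)
Definition Lser (N n : nat) (beta : RR) (c : nat) (i : 'I_n) (a b : 'I_N)
  : ser N n := fun s f =>
  match s with
  | 0%N => if a == b then f else 0
  | s'.+1 => iter s' (fun g => - (dop beta i g - c%:R *: g)) (Eop i b a f)
  end.

Definition mser (N n : nat) := 'I_N -> 'I_N -> ser N n.
Definition mmul (N n : nat) (X Y : mser N n) : mser N n :=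
  fun a b s f => \sum_(c : 'I_N) sermul (X a c) (Y c b) s f.
Definition mone (N n : nat) : mser N n :=
  fun a b => if a == b then @serone N n else @serzero N n.

Definition Tser (N n : nat) (beta : RR) (c : nat) : mser N n :=
  foldr (fun i acc => mmul (fun a b => Lser beta c i a b) acc) (@mone N n)
        (enum 'I_n).

Definition T1 (N n : nat) (beta : RR) (a b : 'I_N) : Sp N n -> Sp N n :=
  Tser beta 0 a b 1%N.

(* S_m is realised as the permutations of 'I_N fixing
   every colour >= m; colour r (0-based) is paired with shift r. *)
Definition Aser (N n : nat) (beta : RR) (m : nat) : ser N n :=
  fun s f =>
  \sum_(w : {perm 'I_N} | perm_on [set j : 'I_N | (j < m)%N] w)
     ((-1) ^+ odd_perm w) *:
     (foldr (fun (r : 'I_N) acc => sermul (Tser beta (nat_of_ord r) r (w r)) acc) (@serone N n)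
            [seq r : 'I_N <- enum 'I_N | (nat_of_ord r < m)%N]) s f.

(* underline / overline: k = (ul k + 1) - N * ol k, with ul k in {0..N-1}
   (0-based version of the paper's underline k in {1..N}). *)
Definition ul (N : nat) (x : int) : nat := absz ((x - 1) %% N%:Z)%Z.
Definition ol (N : nat) (x : int) : int := - ((x - 1) %/ N%:Z)%Z.

Definition Lstrict (n : nat) (k : expo n) : Prop :=
  forall i j : 'I_n, (i < j)%N -> k j < k i.

Definition domlt (n : nat) (l k : expo n) : Prop :=
  [/\ l != k, \sum_(i : 'I_n) l i = \sum_(i : 'I_n) k i &
      forall p : nat, (p <= n)%N ->
        \sum_(i : 'I_n | (i < p)%N) l i <= \sum_(i : 'I_n | (i < p)%N) k i].

Definition uhat (N n : nat) (k : expo n) : Sp N n :=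
  \sum_(w : 'S_n) ((-1) ^+ odd_perm w) *:
     \sum_(c : colr N n | [forall i, (c i : nat) == ul N (k (w i))])
        << ([ffun i => ol N (k (w i))], c) >>.

Definition common_eigen (N n : nat) (beta : RR) (X : Sp N n) : Prop :=
  forall m : nat, (1 <= m <= N)%N ->
  forall s : nat, exists lam : CC, Aser beta m s X = lam *: X.

Definition triangular (N n : nat) (k : expo n) (X : Sp N n) : Prop :=
  exists (ls : seq (expo n)) (c : expo n -> CC),
    (forall l, l \in ls -> Lstrict l /\ domlt l k) /\
    X = uhat N k + \sum_(l <- ls) c l *: uhat N l.

Definition is_X (N n : nat) (beta : RR) (k : expo n) (X : Sp N n) : Prop :=
  triangular k X /\ common_eigen beta X.

(* Main.v *)
Require Import Defs.
From mathcomp Require Import all_boot all_order all_algebra all_fingroup.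
From mathcomp Require Import complex.
From mathcomp Require Import Rstruct.
From mathcomp.multinomials Require Import monalg.
From mathcomp Require Import ring.
From Stdlib Require Import Classical.
Set Implicit Arguments.
Unset Strict Implicit.
Unset Printing Implicit Defensive.
Import Order.TTheory GRing.Theory Num.Theory.
Local Open Scope ring_scope.

Lemma ul_int N x : (0 < N)%N -> ((ul N x)%:Z = (x - 1) %% N%:Z)%Z.
Proof.
move=> hN; rewrite /ul; apply: gez0_abs; apply: modz_ge0.
by rewrite eqz_nat -lt0n.
Qed.

Lemma ul_lt N x : (0 < N)%N -> (ul N x < N)%N.
Proof.
move=> hN; rewrite -ltz_nat ul_int //; apply: ltz_pmod.
by rewrite ltz_nat.
Qed.

Lemma ul_ol N x : (0 < N)%N -> x = (ul N x)%:Z + 1 - N%:Z * ol N x.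
Proof.
move=> hN; rewrite ul_int // /ol mulrN opprK.
have h := divz_eq (x - 1) N%:Z.
move: h; set q := ((x - 1) %/ N)%Z; set r := ((x - 1) %% N)%Z => h.
apply: (addIr (-1)); rewrite [LHS]h; ring.
Qed.

Lemma ulol_inj N x y : (0 < N)%N -> ul N x = ul N y -> ol N x = ol N y -> x = y.
Proof. by move=> hN e1 e2; rewrite (ul_ol x hN) (ul_ol y hN) e1 e2. Qed.

Lemma card_lt_ord n (i : 'I_n) : #|[set j : 'I_n | (j < i)%N]| = i.
Proof.
have hi : (i <= n)%N by apply: ltnW.
have -> : [set j : 'I_n | (j < i)%N] = [set widen_ord hi j | j : 'I_i].
  apply/setP => j; rewrite inE; apply/idP/imsetP.
    by move=> ji; exists (Ordinal ji) => //; apply: val_inj.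
  by move=> [j' _ ->] /=.
by rewrite card_imset ?card_ord //; by move=> a b /(congr1 val) /= /val_inj.
Qed.

Lemma rank_strict n (f : expo n) (i : 'I_n) : Lstrict f ->
  #|[set j : 'I_n | f i < f j]| = i.
Proof.
move=> hf; rewrite -card_lt_ord; apply: eq_card => j; rewrite !inE.
case: (ltngtP j i) => [ji|ij|/val_inj ->]; first by rewrite hf.
  by apply/negbTE; rewrite -leNgt ltW // hf.
by rewrite ltxx.
Qed.

Lemma perm_strict n (l k : expo n) (w : 'S_n) : Lstrict l -> Lstrict k ->
  (forall i, l (w i) = k i) -> l = k.
Proof.
move=> hl hk e.
have wi : forall i, w i = i.
  move=> i; apply: val_inj => /=.
  rewrite -(rank_strict (w i) hl) -(rank_strict i hk).
  rewrite -(card_preimset _ (@perm_inj _ w)); apply: eq_card => j.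
  by rewrite !inE e e.
by apply/ffunP => i; rewrite -e wi.
Qed.

Section S.
Variables N n : nat.

Lemma lext0 (phi : Kidx N n -> Sp N n) : lext phi 0 = 0.
Proof. by rewrite /lext msupp0 big_nil. Qed.

Lemma lext_diag (lam : Kidx N n -> CC) (f : Sp N n) x :
  (lext (fun k => lam k *: << k >>) f)@_x = lam x * f@_x.
Proof.
rewrite /lext raddf_sum /=.
under eq_bigr => k _ do rewrite !mcoeffZ mcoeffU.
rewrite -big_filter.
have -> : [seq i <- finmap.enum_fset (msupp f) | true] = finmap.enum_fset (msupp f) by rewrite filter_predT.
rewrite (eq_bigr (fun k => if k == x then f@_x * lam x else 0)); last first.
  by move=> k _; case: eqP => [->|]; rewrite ?mulr1 ?mulr0 // mulrC.
case: (msuppP f x) => [xs|].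
  rewrite (big_rem x) //= eqxx.
  rewrite big_seq big1 ?addr0; first by rewrite mulrC.
  move=> k kr.
  case: eqP => // e.
  move: kr; rewrite e mem_rem_uniqF //; exact: finmap.fset_uniq.
move=> xs; rewrite mulr0 big_seq big1 // => k ks; case: eqP => // e.
by rewrite -e ks in xs.
Qed.


Lemma dop0 beta i : dop beta i (0 : Sp N n) = 0.
Proof.
have Q0 : forall a b, Qop a b (0 : Sp N n) = 0 by move=> a b; exact: lext0.
have Z0 : zdz i (0 : Sp N n) = 0 by exact: lext0.
rewrite /dop Z0 !scaler0 add0r.
rewrite [X in _ + X - _]big1; last by move=> j _; exact: Q0.
rewrite [X in _ - X]big1; last by move=> j _; exact: Q0.
by rewrite subr0 addr0.
Qed.

Lemma Lser0 beta c i a b s : Lser beta c i a b s (0 : Sp N n) = 0.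
Proof.
case: s => [|s] /=; first by case: (a == b).
rewrite /Eop lext0; elim: s => //= s ->.
by rewrite dop0 scaler0 subr0 oppr0.
Qed.

Definition Pm (M : mser N n) :=
  (forall a b f, M a b 0%N f = if a == b then f else 0) /\ (forall a b s, M a b s 0 = 0).

Lemma mmulP X Y : Pm X -> Pm Y -> Pm (Defs.mmul X Y).
Proof.
move=> [X0 X1] [Y0 Y1]; split.
  move=> a b f; rewrite /Defs.mmul /sermul.
  under eq_bigr => c _ do rewrite big_ord1 /= subnn X0 Y0.
  rewrite (bigD1 b) //= eqxx big1 ?addr0 // => c /negbTE cb.
  by rewrite cb; case: (a == c).
move=> a b s; rewrite /Defs.mmul /sermul big1 // => c _.
by rewrite big1 // => r _; rewrite Y1 X1.
Qed.

Lemma mmul1 X Y a b f : Pm X -> Pm Y ->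
  Defs.mmul X Y a b 1%N f = X a b 1%N f + Y a b 1%N f.
Proof.
move=> [X0 X1] [Y0 Y1]; rewrite /Defs.mmul /sermul.
under eq_bigr => c _ do rewrite big_ord_recr big_ord1 /= X0 Y0.
rewrite big_split /= addrC; congr (_ + _).
  rewrite (bigD1 b) //= eqxx big1 ?addr0 // => c /negbTE ->; exact: X1.
rewrite (bigD1 a) //= eqxx big1 ?addr0 // => c; rewrite eq_sym => /negbTE ->.
done.
Qed.

Lemma moneP : Pm (@Defs.mone N n).
Proof.
split=> [a b f|a b s]; rewrite /Defs.mone; case: (a == b) => //.
by rewrite /serone; case: (s == 0%N).
Qed.

Lemma TserL beta c (L : seq 'I_n) :
  let T := foldr (fun i acc => Defs.mmul (fun a b => Lser beta c i a b) acc) (@Defs.mone N n) L in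
  Pm T /\ forall a b f, T a b 1%N f = \sum_(i <- L) Eop i b a f.
Proof.
elim: L => [|i L [IHP IH1]] /=.
  split; first exact: moneP.
  by move=> a b f; rewrite big_nil /Defs.mone; case: (a == b).
have LP : Pm (fun a b => Lser beta c i a b).
  split=> //= a b s; exact: Lser0.
split; first exact: mmulP.
by move=> a b f; rewrite mmul1 // IH1 big_cons.
Qed.

Lemma TserP beta c : Pm (Tser beta c).
Proof. exact: (TserL beta c (enum 'I_n)).1. Qed.

Lemma Tser1 beta c a b (f : Sp N n) :
  Tser beta c a b 1%N f = \sum_(i <- enum 'I_n) Eop i b a f.
Proof. exact: (TserL beta c (enum 'I_n)).2. Qed.


Lemma sermul0 (F G : ser N n) f : sermul F G 0%N f = F 0%N (G 0%N f).
Proof. by rewrite /sermul big_ord1 subnn. Qed.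

Lemma sermul1 (F G : ser N n) f :
  sermul F G 1%N f = F 0%N (G 1%N f) + F 1%N (G 0%N f).
Proof. by rewrite /sermul big_ord_recr big_ord1 /= subn0 subnn. Qed.

Lemma foldG (T : 'I_N -> ser N n) (fx : pred 'I_N) :
  (forall r g, T r 0%N g = if fx r then g else 0) ->
  (forall r s, T r s 0 = 0) ->
  forall L : seq 'I_N,
  let G := foldr (fun r acc => sermul (T r) acc) (@serone N n) L in
  [/\ (forall s, G s 0 = 0),
      (forall f, G 0%N f = if all fx L then f else 0),
      (all fx L -> forall f, G 1%N f = \sum_(r <- L) T r 1%N f) &
      ((1 < count (predC fx) L)%N -> forall f, G 1%N f = 0)].
Proof.
move=> T0 Ts0; elim=> [|r L [IH0 IHz IH1 IHc]] /=.
  split=> //.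
  - by move=> s; rewrite /serone; case: (s == 0%N).
  - by move=> _ f; rewrite big_nil.
split.
- move=> s; rewrite /sermul big1 // => i _; by rewrite IH0 Ts0.
- by move=> f; rewrite sermul0 T0 IHz; case: (fx r); case: (all fx L).
- move=> /andP[fr aL] f; rewrite sermul1 T0 fr IHz aL IH1 // big_cons addrC.
  done.
- move=> cnt f; rewrite sermul1 T0 IHz.
  case fr: (fx r); move: cnt; rewrite /= fr /=.
    rewrite add0n => c2; rewrite IHc //.
    have -> : all fx L = false.
      by apply/negbTE; rewrite -has_predC has_count; apply: ltn_trans c2.
    by rewrite Ts0 addr0.
  rewrite add1n ltnS => c1; rewrite add0r.
  have -> : all fx L = false.
    by apply/negbTE; rewrite -has_predC has_count.
  exact: Ts0.
Qed.


Lemma Aser1 beta m (f : Sp N n) :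
  Aser beta m 1%N f =
  \sum_(r <- [seq r : 'I_N <- enum 'I_N | (nat_of_ord r < m)%N])
     \sum_(i <- enum 'I_n) Eop i r r f.
Proof.
rewrite /Aser (bigD1 1%g) ?perm_on1 //= big1 ?addr0; last first.
  move=> w /andP[won w1].
  set L := [seq r : 'I_N <- enum 'I_N | (nat_of_ord r < m)%N].
  have [G0 Gz G1 Gc] := foldG (T := fun r => Tser beta r r (w r))
     (fx := fun r => r == w r)
     (fun r g => (TserP beta r).1 r (w r) g) (fun r s => (TserP beta r).2 r (w r) s) L.
  rewrite Gc ?scaler0 //.
  have [r0 r0w] : exists r0, w r0 != r0.
    apply/existsP; apply: contraR w1 => /existsPn H; apply/eqP/permP => r.
    by rewrite perm1; apply/eqP; move: (H r); rewrite negbK.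
  have inS x : w x != x -> (nat_of_ord x < m)%N.
    move=> wx; case: (boolP (x \in [set j : 'I_N | (nat_of_ord j < m)%N])).
      by rewrite inE.
    by move/(out_perm won)/eqP; rewrite (negbTE wx).
  have r1w : w (w r0) != w r0 by apply: contra r0w => /eqP/perm_inj ->.
  rewrite -size_filter.
  have -> : 1%N = (size [:: r0; w r0]).-1 by [].
  apply: (@uniq_leq_size _ [:: r0; w r0]).
    by rewrite /= inE andbT eq_sym r0w.
  move=> x; rewrite !inE => /orP[] /eqP ->; rewrite mem_filter /= mem_filter mem_enum andbT.
    by rewrite eq_sym r0w inS.
  by rewrite eq_sym r1w inS.
rewrite odd_perm1 expr0 scale1r.
have [G0 Gz G1 Gc] := foldG (T := fun r => Tser beta r r ((1%g : {perm 'I_N}) r))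
     (fx := fun r => r == (1%g : {perm 'I_N}) r)
     (fun r g => (TserP beta r).1 r _ g) (fun r s => (TserP beta r).2 r _ s)
     [seq r : 'I_N <- enum 'I_N | (nat_of_ord r < m)%N].
rewrite G1; last by apply/allP => r _; rewrite perm1.
by apply: eq_bigr => r _; rewrite Tser1 perm1.
Qed.

End S.

Section S3.
Variables N n : nat.

Definition cnt (c : colr N n) (a : 'I_N) : nat := #|[set i | c i == a]|.

Lemma Eop_diag i a : Eop i a a =1 lext (fun k : Kidx N n => (k.2 i == a)%:R *: << k >>).
Proof.
move=> f; rewrite /Eop /lext; apply: eq_bigr => k _; congr (_ *: _).
case: eqP => [e|_]; last by rewrite scale0r.
rewrite scale1r; congr << _ >>; case: k e => k1 k2 /= e; congr (_, _).
by apply/ffunP => j; rewrite /setf ffunE; case: eqP => // ->.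
Qed.

Lemma S_coef a (f : Sp N n) x :
  (\sum_(i <- enum 'I_n) Eop i a a f)@_x = (cnt x.2 a)%:R * f@_x.
Proof.
rewrite raddf_sum /=.
under eq_bigr => i _ do rewrite Eop_diag lext_diag.
rewrite -mulr_suml big_enum /= -natr_sum; congr (_%:R * _).
rewrite /cnt -sum1_card [RHS]big_mkcond /=; apply: eq_bigr => i _.
by rewrite inE; case: (x.2 i == a).
Qed.

Lemma zdz_coef i (f : Sp N n) x : (zdz i f)@_x = (x.1 i)%:~R * f@_x.
Proof. exact: lext_diag. Qed.

Lemma uhat_supp l (x : Kidx N n) : (uhat N l)@_x != 0 ->
  exists (w : 'S_n) (c : colr N n),
    (forall i, (c i : nat) = ul N (l (w i))) /\ x = ([ffun i => ol N (l (w i))], c).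
Proof.
move=> nz; apply: NNPP => H; move: nz; apply/negP; rewrite negbK; apply/eqP.
rewrite /uhat raddf_sum /= big1 // => w _; rewrite mcoeffZ raddf_sum /= big1 ?mulr0 // => c Pc.
rewrite mcoeffU; case: eqP => [e|]; last by rewrite mulr0n.
exfalso; apply: H; exists w, c; split=> //.
by move=> i; apply/eqP; move/forallP: Pc; apply.
Qed.


Definition c0 (hN : (0 < N)%N) (k : expo n) : colr N n :=
  [ffun i => Ordinal (ul_lt (k i) hN)].
Definition x0 (hN : (0 < N)%N) (k : expo n) : Kidx N n :=
  ([ffun i => ol N (k i)], c0 hN k).

Lemma uhat_x0 hN l k : (uhat N l)@_(x0 hN k) =
  \sum_(w : 'S_n) (-1) ^+ odd_perm w * (if [forall i, l (w i) == k i] then 1 else 0).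
Proof.
rewrite /uhat raddf_sum /=; apply: eq_bigr => w _; rewrite mcoeffZ; congr (_ * _).
rewrite raddf_sum /=.
case: (boolP [forall i, l (w i) == k i]) => [/forallP H|H].
  have Pc0 : [forall i, (c0 hN k i : nat) == ul N (l (w i))].
    by apply/forallP => i; rewrite ffunE /= (eqP (H i)).
  rewrite (bigD1 (c0 hN k)) //= mcoeffU.
  have -> : ([ffun i => ol N (l (w i))], c0 hN k) == x0 hN k.
    by rewrite /x0; apply/eqP; congr (_, _); apply/ffunP => i; rewrite !ffunE (eqP (H i)).
  rewrite big1 ?addr0 // => c /andP[_ cc]; rewrite mcoeffU.
  case: eqP => [[_ e]|]; last by rewrite mulr0n.
  by rewrite e eqxx in cc.
rewrite big1 // => c Pc; rewrite mcoeffU; case: eqP => [[e1 e2]|]; last by rewrite mulr0n.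
move: H; rewrite negb_forall => /existsP [i /eqP]; case; apply: (ulol_inj hN).
  by move/forallP: Pc => /(_ i) /eqP <-; rewrite e2 ffunE.
by move/ffunP: e1 => /(_ i); rewrite !ffunE.
Qed.

Lemma strict_inj (k : expo n) : Lstrict k -> injective k.
Proof.
move=> hk i j e; apply: val_inj; case: (ltngtP i j) => // ij.
  by have := hk _ _ ij; rewrite e ltxx.
by have := hk _ _ ij; rewrite e ltxx.
Qed.

Lemma uhat_kk hN k : Lstrict k -> (uhat N k)@_(x0 hN k) = 1.
Proof.
move=> hk; rewrite uhat_x0 (bigD1 1%g) //=.
have -> : [forall i, k ((1%g : 'S_n) i) == k i] by apply/forallP => i; rewrite perm1.
rewrite odd_perm1 expr0 mulr1 big1 ?addr0 // => w w1.
case: forallP => [H|]; last by rewrite mulr0.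
exfalso; move/negP: w1; apply; apply/eqP/permP => i.
by rewrite perm1; apply: (strict_inj hk); apply/eqP.
Qed.

Lemma uhat_lk hN l k : Lstrict l -> Lstrict k -> l != k -> (uhat N l)@_(x0 hN k) = 0.
Proof.
move=> hl hk lk; rewrite uhat_x0 big1 // => w _.
case: forallP => [H|]; last by rewrite mulr0.
exfalso; move/negP: lk; apply; apply/eqP; apply: (perm_strict (w := w)) => // i.
exact/eqP.
Qed.

End S3.

Lemma sum_col N n (c : colr N n) :
  \sum_i (c i : nat)%:Z = \sum_(a : 'I_N) (a : nat)%:Z *+ cnt c a.
Proof.
rewrite (partition_big c predT) //=; apply: eq_bigr => a _.
rewrite (eq_bigr (fun _ => (a : nat)%:Z)); last by move=> i /eqP ->.
by rewrite sumr_const /cnt cardsE.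
Qed.

Lemma sum_decomp N n (l : expo n) (w : 'S_n) (c : colr N n) : (0 < N)%N ->
  (forall i, (c i : nat) = ul N (l (w i))) ->
  \sum_i l i = \sum_i ((c i : nat)%:Z + 1) - N%:Z * \sum_i ol N (l (w i)).
Proof.
move=> hN hc; rewrite (reindex_inj (@perm_inj _ w)) /=.
rewrite mulr_sumr -sumrB; apply: eq_bigr => i _.
by rewrite hc -ul_ol.
Qed.

Lemma eigenS N n beta (X : Sp N n) : common_eigen beta X ->
  forall a : 'I_N, exists mu : CC,
    \sum_(i <- enum 'I_n) Eop i a a X = mu *: X.
Proof.
move=> hE.
pose S (r : 'I_N) := \sum_(i <- enum 'I_n) Eop i r r X.
have hm : forall m, (m <= N)%N -> exists lam : CC,
    \sum_(r : 'I_N | (nat_of_ord r < m)%N) S r = lam *: X.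
  case=> [|m] hm.
    by exists 0; rewrite big_pred0 ?scale0r // => r; rewrite ltn0.
  have [lam H] := hE m.+1 hm 1%N; exists lam; rewrite -H Aser1 big_filter.
  by rewrite big_enum_cond.
move=> a.
have [lam1 H1] := hm a.+1 (ltn_ord a).
have [lam0 H0] := hm a (ltnW (ltn_ord a)).
exists (lam1 - lam0); rewrite scalerBl -H1 -H0 (bigD1 a) //=.
rewrite (eq_bigl (fun r : 'I_N => (nat_of_ord r < a)%N)) ?addrK //.
move=> r; rewrite ltnS -val_eqE /=.
by case: (ltngtP r a).
Qed.

Unset Implicit Arguments.

Theorem proposition13 (N n : nat) (beta : RR) (k : expo n) (X : Sp N n) :
  (1 <= N)%N -> (1 <= n)%N -> 0 < beta -> Lstrict k ->
  is_X beta k X ->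
  (forall a : 'I_N,
      T1 beta a a X = (#|[set i : 'I_n | ul N (k i) == a]|)%:R *: X) /\
  \sum_(i : 'I_n) zdz i X = (\sum_(i : 'I_n) ol N (k i))%:~R *: X.
Proof.
move=> hN _ _ hk [[ls [c [hls hX]]] hE].
have X0 : X@_(x0 hN k) = 1.
  rewrite hX mcoeffD uhat_kk // raddf_sum /= big_seq big1 ?addr0 // => l lin.
  have [hl [lk _ _]] := hls l lin.
  by rewrite mcoeffZ uhat_lk ?mulr0.
have key : forall a x, X@_x != 0 -> cnt x.2 a = cnt (c0 hN k) a.
  move=> a x nz; have [mu H] := eigenS hE a.
  have Hc : forall y, (cnt y.2 a)%:R * X@_y = mu * X@_y.
    by move=> y; rewrite -S_coef H mcoeffZ.
  have := Hc (x0 hN k); rewrite X0 !mulr1 => Hmu.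
  have := Hc x; rewrite -Hmu => /(mulIf nz) /eqP.
  by rewrite eqr_nat => /eqP.
split.
  move=> a; rewrite /T1 Tser1; apply/malgP => x.
  rewrite S_coef mcoeffZ.
  have [->|nz] := eqVneq (X@_x) 0; first by rewrite !mulr0.
  rewrite key //; congr (_%:R * _); apply: eq_card => i; rewrite !inE ffunE.
  by rewrite -val_eqE.
apply/malgP => x; rewrite raddf_sum /= mcoeffZ.
under eq_bigr => i _ do rewrite zdz_coef.
rewrite -mulr_suml.
have [->|nz] := eqVneq (X@_x) 0; first by rewrite !mulr0.
congr (_ * _); rewrite -!mulrz_sumr; congr (_ *~ _).
have [l [hlk [w [cc [hc ex]]]]] : exists l : expo n, (\sum_i l i = \sum_i k i) /\
   exists (w : 'S_n) (cc : colr N n),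
    (forall i, (cc i : nat) = ul N (l (w i))) /\ x = ([ffun i => ol N (l (w i))], cc).
  case: (eqVneq ((uhat N k)@_x) 0) => [uk|uk]; last first.
    by exists k; split=> //; apply: uhat_supp.
  move: nz; rewrite hX mcoeffD uk add0r raddf_sum /= => nz.
  apply: NNPP => H; move: nz; apply/negP; rewrite negbK; apply/eqP.
  rewrite big_seq big1 // => l lin; rewrite mcoeffZ.
  case: (eqVneq ((uhat N l)@_x) 0) => [->|ul0]; first by rewrite mulr0.
  exfalso; apply: H; exists l; split; first by have [_ [_ ->]] := hls l lin.
  exact: uhat_supp.
have e1 := @sum_decomp N n l w cc hN hc.
have hc0 : forall i, (c0 hN k i : nat) = ul N (k ((1%g : 'S_n) i)).
  by move=> i; rewrite ffunE perm1.
have e2 := @sum_decomp N n k 1%g (c0 hN k) hN hc0.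
have ecc : \sum_i ((cc i : nat)%:Z + 1) = \sum_i ((c0 hN k i : nat)%:Z + 1).
  rewrite !big_split /= !sum_col; congr (_ + _); apply: eq_bigr => a _.
  by have := key a x nz; rewrite ex /= => ->.
rewrite hlk e2 ecc in e1.
move/addrI/oppr_inj/mulfI: e1; rewrite eqz_nat -lt0n => /(_ hN) e1.
rewrite ex /=; under eq_bigr => i _ do rewrite ffunE.
rewrite -e1; apply: eq_bigr => i _; by rewrite perm1.
Qed.
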